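(* Let $k$ be an algebraically closed field, $B$ a finite-dimensional $k$-algebra, $P_0$ a finitely generated projective $B$-module, $A=B[P_0]$ the one-point extension, $\mathcal{R}$ the restriction functor and $S$ the simple injective $A$-module described below. Let $T$ be a silting $A$-module with respect to a projective presentation $\sigma:Q_1\to Q_0$ of $T$. Then (1) $\mathscr{D}_{\mathcal{R}\sigma}\subseteq\mathrm{Gen}(\mathcal{R}T)$; (2) if $\mathrm{Ext}^1_A(S,T)=0$, then $\mathrm{Gen}(\mathcal{R}T)\subseteq\mathscr{D}_{\mathcal{R}\sigma}$; in particular $\mathcal{R}T$ is a silting $B$-module.
   Context: All modules are left modules, in the category $\mathrm{Mod}\text{-}R$ of all modules. $A=\begin{pmatrix} B & P_0\\ 0 & k\end{pmatrix}$; $e_B$ is the identity of $B$ viewed in $A$; $\mathcal{R}=\mathrm{Hom}_A(Ae_B,-):\mathrm{Mod}\text{-}A\to\mathrm{Mod}\text{-}B$ (exact, preserves projectives). $S$ is the simple top of the unique indecomposable projective $A$-module which is not a projective $B$-module. A projective presentation of $T$ is a morphism $\sigma:Q_1\to Q_0$ of projective modules with $\mathrm{Coker}\,\sigma\cong T$; $\mathcal{R}\sigma:\mathcal{R}Q_1\to\mathcal{R}Q_0$ is then a projective presentation of $\mathcal{R}T$. For such $\sigma$, $\mathscr{D}_\sigma$ is the class of modules $M$ such that $\mathrm{Hom}(\sigma,M):\mathrm{Hom}(Q_0,M)\to\mathrm{Hom}(Q_1,M)$ is surjective. $\mathrm{Gen}(T)$ is the class of epimorphic images of arbitrary direct sums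 of copies of $T$. $T$ is silting if it has a projective presentation $\sigma$ with $\mathscr{D}_\sigma=\mathrm{Gen}(T)$. *)

(* Defs.v *)
From HB Require Import structures.
From mathcomp Require Import all_boot all_algebra all_field.
Set Warnings "-redundant-canonical-projection -ambiguous-paths -notation-overridden".
Set Implicit Arguments.
Unset Strict Implicit.
Unset Printing Implicit Defensive.
Import GRing.Theory.
Local Open Scope ring_scope.

(* The one-point extension A = [[B, P0], [0, k]] of a k-algebra B by   *)
(* a left B-module P0.  Elements are triples ((b, p), c) standing for  *)
(* the matrix [[b, p], [0, c]]; the right k-action on P0 is via c%:A.  *)
Section OnePoint.
Variables (k : fieldType) (B : falgType k) (P0 : lmodType B).

Definition onept : Type := (B * P0 * k)%type.
HB.instance Definition _ := GRing.Zmodule.on onept.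

Definition rk (c : k) (p : P0) : P0 := (c%:A : B) *: p.

Definition opmul (x y : onept) : onept :=
  ((x.1.1 * y.1.1, x.1.1 *: y.1.2 + rk y.2 x.1.2), x.2 * y.2).
Definition opone : onept := ((1, 0), 1).

Lemma rkA c d p : rk c (rk d p) = rk (d * c) p.
Proof. by rewrite /rk scalerA mulr_algl scalerA mulrC. Qed.

Lemma rkD c x y : rk c (x + y) = rk c x + rk c y.
Proof. by rewrite /rk scalerDr. Qed.

Lemma rk_comm b c p : b *: rk c p = rk c (b *: p).
Proof. by rewrite /rk !scalerA mulr_algl mulr_algr. Qed.

Lemma opmulA : associative opmul.
Proof.
move=> [[a p] c] [[a' p'] c'] [[a'' p''] c'']; rewrite /opmul /=.
congr ((_, _), _); first by rewrite mulrA.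
  by rewrite scalerDr rk_comm scalerA rkD rkA addrA.
by rewrite mulrA.
Qed.

Lemma opmul1 : left_id opone opmul.
Proof.
move=> [[a p] c]; rewrite /opmul /= mul1r scale1r /rk scaler0 addr0 mul1r.
by [].
Qed.

Lemma opmulr1 : right_id opone opmul.
Proof.
move=> [[a p] c]; rewrite /opmul /= mulr1 scaler0 add0r /rk.
by rewrite !scale1r mulr1.
Qed.

Lemma opmulDl : left_distributive opmul +%R.
Proof.
move=> [[a p] c] [[a' p'] c'] [[a'' p''] c'']; rewrite /opmul /= /rk.
congr ((_, _), _); first by rewrite mulrDl.
  by rewrite scalerDl scalerDr addrACA.
by rewrite mulrDl.
Qed.

Lemma opmulDr : right_distributive opmul +%R.
Proof.
move=> [[a p] c] [[a' p'] c'] [[a'' p''] c'']; rewrite /opmul /= /rk.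
congr ((_, _), _); first by rewrite mulrDr.
  by rewrite scalerDr !scalerDl addrACA.
by rewrite mulrDr.
Qed.

Lemma opone_neq0 : opone != 0.
Proof.
apply/eqP => /(congr1 snd) /= /eqP; by rewrite oner_eq0.
Qed.

HB.instance Definition _ := GRing.Zmodule_isNzRing.Build onept
  opmulA opmul1 opmulr1 opmulDl opmulDr opone_neq0.

End OnePoint.

(* The restriction functor R = Hom_A(A e_B, -) ~= e_B (-) : Mod-A ->   *)
(* Mod-B, realised on the e_B-fixed part {x | e_B x = x} of M.         *)
Section Restriction.
Variables (k : fieldType) (B : falgType k) (P0 : lmodType B).
Local Notation A := (onept P0).

Definition eB : A := ((1, 0), 0).
Definition inB (b : B) : A := ((b, 0), 0).

Lemma mulA_def (x y : A) : x * y = opmul x y.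
Proof. by []. Qed.

Lemma eB_inB b : eB * inB b = inB b.
Proof.
by rewrite mulA_def /opmul /eB /inB /= mul1r scaler0 /rk scaler0 addr0 mul0r.
Qed.

Variable M : lmodType A.

Definition RM : Type := {x : M | eB *: x == x}.
HB.instance Definition _ := Choice.on RM.
Definition RMmk (z : M) (h : eB *: z == z) : RM :=
  exist (fun z : M => eB *: z == z) z h.

Lemma RM0_subproof : eB *: (0 : M) == 0.
Proof. by rewrite scaler0. Qed.
Definition RM0 : RM := RMmk RM0_subproof.

Lemma RMadd_subproof (x y : RM) : eB *: (sval x + sval y) == sval x + sval y.
Proof. by rewrite scalerDr (eqP (svalP x)) (eqP (svalP y)). Qed.
Definition RMadd (x y : RM) : RM := RMmk (RMadd_subproof x y).

Lemma RMopp_subproof (x : RM) : eB *: (- sval x) == - sval x.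
Proof. by rewrite scalerN (eqP (svalP x)). Qed.
Definition RMopp (x : RM) : RM := RMmk (RMopp_subproof x).

Lemma RMaddA : associative RMadd.
Proof. by move=> x y z; apply: val_inj; rewrite /= addrA. Qed.
Lemma RMaddC : commutative RMadd.
Proof. by move=> x y; apply: val_inj; rewrite /= addrC. Qed.
Lemma RMadd0 : left_id RM0 RMadd.
Proof. by move=> x; apply: val_inj; rewrite /= add0r. Qed.
Lemma RMaddN : left_inverse RM0 RMopp RMadd.
Proof. by move=> x; apply: val_inj; rewrite /= addNr. Qed.

HB.instance Definition _ := GRing.isZmodule.Build RM RMaddA RMaddC RMadd0 RMaddN.

Lemma RMscale_subproof (b : B) (x : RM) : eB *: (inB b *: sval x) == inB b *: sval x.
Proof. by rewrite scalerA eB_inB. Qed.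
Definition RMscale (b : B) (x : RM) : RM := RMmk (RMscale_subproof b x).

Lemma inBM b c : inB b * inB c = inB (b * c).
Proof.
by rewrite mulA_def /opmul /inB /= scaler0 /rk scaler0 addr0 mul0r.
Qed.
Lemma inB1 x : RMscale 1 x = x.
Proof.
by apply: val_inj; rewrite /= (eqP (svalP x)).
Qed.
Lemma inBD b c : inB (b + c) = inB b + inB c.
Proof. by rewrite /inB; congr ((_, _), _); rewrite addr0. Qed.

Lemma RMscaleA b c x : RMscale b (RMscale c x) = RMscale (b * c) x.
Proof. by apply: val_inj; rewrite /= scalerA inBM. Qed.
Lemma RMscaleDr : right_distributive RMscale +%R.
Proof. by move=> b x y; apply: val_inj; rewrite /= scalerDr. Qed.
Lemma RMscaleDl x : {morph RMscale^~ x : b c / b + c}.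
Proof. by move=> b c; apply: val_inj; rewrite /= inBD scalerDl. Qed.

HB.instance Definition _ := GRing.Zmodule_isLmodule.Build B RM
  RMscaleA inB1 RMscaleDr RMscaleDl.

End Restriction.

Section RestrictionMor.
Variables (k : fieldType) (B : falgType k) (P0 : lmodType B).
Local Notation A := (onept P0).
Variables (M N : lmodType A) (f : {linear M -> N}).

Lemma Rfun_subproof (x : RM M) : eB P0 *: f (sval x) == f (sval x).
Proof. by rewrite -linearZ (eqP (svalP x)). Qed.
Definition Rfun (x : RM M) : RM N := RMmk (Rfun_subproof x).

Lemma Rfun_linear : linear Rfun.
Proof. by move=> a x y; apply: val_inj; rewrite /= linearP. Qed.

HB.instance Definition _ := GRing.isLinear.Build B (RM M) (RM N) *:%R Rfun
  Rfun_linear.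

Definition Rmor : {linear RM M -> RM N} := Rfun.
End RestrictionMor.

(* S: the simple top of the indecomposable projective A e_k, i.e. the  *)
(* one-dimensional module k on which ((b, p), c) acts by c.           *)
Section SimpleS.
Variables (k : fieldType) (B : falgType k) (P0 : lmodType B).
Local Notation A := (onept P0).

Definition Smod : Type := let _ := P0 in k.
HB.instance Definition _ := GRing.Zmodule.on Smod.

Definition Sscale (a : A) (c : Smod) : Smod := (a.2 * (c : k) : k).
Lemma SscaleA a b c : Sscale a (Sscale b c) = Sscale (a * b) c.
Proof. by rewrite /Sscale mulrA. Qed.
Lemma Sscale1 : left_id 1 Sscale.
Proof. by move=> c; rewrite /Sscale /= mul1r. Qed.
Lemma SscaleDr : right_distributive Sscale +%R.
Proof. by move=> a x y; rewrite /Sscale mulrDr. Qed.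
Lemma SscaleDl c : {morph Sscale^~ c : a b / a + b}.
Proof. by move=> a b; rewrite /Sscale mulrDl. Qed.
HB.instance Definition _ := GRing.Zmodule_isLmodule.Build A Smod
  SscaleA Sscale1 SscaleDr SscaleDl.
End SimpleS.

Section ModuleNotions.
Variable R : nzRingType.

Definition surj (X Y : Type) (f : X -> Y) := forall y, exists x, f x = y.

Definition projective (P : lmodType R) : Prop :=
  forall (M N : lmodType R) (g : {linear M -> N}) (f : {linear P -> N}),
    surj g -> exists h : {linear P -> M}, forall x, g (h x) = f x.

Definition fin_gen (P : lmodType R) : Prop :=
  exists (n : nat) (v : 'I_n -> P),
    forall p : P, exists c : 'I_n -> R, p = \sum_(i < n) c i *: v i.

Definition proj_presentation (Q1 Q0 : lmodType R) (sigma : {linear Q1 -> Q0})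
  (T : lmodType R)
  : Prop :=
  [/\ projective Q1, projective Q0 &
      exists pi : {linear Q0 -> T},
        surj pi /\ forall y, pi y = 0 <-> exists x, sigma x = y].

Definition Dcls (Q1 Q0 : lmodType R) (sigma : {linear Q1 -> Q0})
  (M : lmodType R) : Prop :=
  forall f : {linear Q1 -> M}, exists g : {linear Q0 -> M},
    forall x, g (sigma x) = f x.

(* Gen(T): M is an epimorphic image of a direct sum T^(I) of copies of T;
   the image of the map T^(I) -> M induced by a family (F i)_i of maps
   T -> M is the set of finite sums of elements F i t. *)
Definition Gen (T M : lmodType R) : Prop :=
  exists (I : Type) (F : I -> {linear T -> M}),
    forall m : M, exists s : seq (I * T), m = \sum_(q <- s) F q.1 q.2.

Definition silting_wrt (Q1 Q0 : lmodType R) (sigma : {linear Q1 -> Q0})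
  (T : lmodType R)
  : Prop :=
  proj_presentation sigma T /\ forall M : lmodType R, Dcls sigma M <-> Gen T M.

Definition silting (T : lmodType R) : Prop :=
  exists (Q1 Q0 : lmodType R) (sigma : {linear Q1 -> Q0}), silting_wrt sigma T.

(* Ext^1_R(X, Y) = 0 (Yoneda description): every short exact sequence
   0 -> Y -> E -> X -> 0 splits. *)
Definition Ext1_zero (X Y : lmodType R) : Prop :=
  forall (E : lmodType R) (i : {linear Y -> E}) (p : {linear E -> X}),
    injective i -> surj p -> (forall e, p e = 0 <-> exists y, i y = e) ->
    exists s : {linear X -> E}, forall x, p (s x) = x.

End ModuleNotions.

(* Main.v *)
Require Import Defs.
From HB Require Import structures.
From mathcomp Require Import all_boot all_algebra all_field.
From mathcomp Require Import boolp.
From Stdlib Require Import ProofIrrelevance FunctionalExtensionality.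
Set Warnings "-notation-overridden -ambiguous-paths -redundant-canonical-projection".
Set Implicit Arguments.
Unset Strict Implicit.
Unset Printing Implicit Defensive.
Import GRing.Theory.
Local Open Scope ring_scope.

Section Basic.
Variables (k : fieldType) (B : falgType k) (P0 : lmodType B).
Local Notation A := (onept P0).

Definition pP (p : P0) : A := ((0, p), 0).

Lemma rk0 p : rk 0 p = 0 :> P0. Proof. by rewrite /rk scale0r scale0r. Qed.
Lemma rk1 p : rk 1 p = p :> P0. Proof. by rewrite /rk scale1r scale1r. Qed.
Lemma rkr0 c : rk c (0 : P0) = 0. Proof. by rewrite /rk scaler0. Qed.
Lemma rkDl c d p : rk (c + d) p = rk c p + rk d p :> P0.
Proof. by rewrite /rk scalerDl scalerDl. Qed.

Lemma eBeB : eB P0 * eB P0 = eB P0.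
Proof. by rewrite mulA_def /opmul /eB /= mulr1 scaler0 rkr0 addr0 mulr0. Qed.
Lemma eBpP p : eB P0 * pP p = pP p.
Proof. by rewrite mulA_def /opmul /eB /pP /= mulr0 scale1r rk0 addr0 mulr0. Qed.
Lemma pPeB p : pP p * eB P0 = 0.
Proof. by rewrite mulA_def /opmul /eB /pP /= mul0r scaler0 rk0 addr0 mul0r. Qed.
Lemma mul_eB (a : A) : a * eB P0 = inB P0 a.1.1.
Proof. by rewrite mulA_def /opmul /eB /inB /= mulr1 scaler0 rk0 addr0 mulr0. Qed.
Lemma eB_mul (a : A) : eB P0 * a = ((a.1.1, a.1.2), 0).
Proof. by rewrite mulA_def /opmul /eB /= mul1r scale1r rkr0 addr0 mul0r. Qed.
Lemma pP_mul p (a : A) : pP p * a = pP (rk a.2 p).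
Proof. by rewrite mulA_def /opmul /pP /= mul0r scale0r add0r mul0r. Qed.
Lemma inB_pP b p : inB P0 b * pP p = pP (b *: p).
Proof. by rewrite mulA_def /opmul /pP /inB /= mulr0 rkr0 addr0 mulr0. Qed.
Lemma pPD p q : pP (p + q) = pP p + pP q.
Proof. by rewrite /pP; congr ((_, _), _); rewrite addr0. Qed.
Lemma inB_pP_add b p : inB P0 b + pP p = ((b, p), 0).
Proof. by rewrite /pP /inB; congr ((_, _), _); rewrite ?addr0 ?add0r. Qed.
Lemma oneA : (1 : A) = ((1, 0), 1). Proof. by []. Qed.
End Basic.

Section Rho.
Variables (k : fieldType) (B : falgType k) (P0 : lmodType B).
Local Notation A := (onept P0).
Variable N : lmodType B.

Record rhoT := RhoT { rn : N; rh : P0 -> N;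
  rhP : forall (b : B) x y, rh (b *: x + y) = b *: rh x + rh y }.
HB.instance Definition _ := gen_eqMixin rhoT.
HB.instance Definition _ := gen_choiceMixin rhoT.

Lemma rhoE x y : rn x = rn y -> rh x =1 rh y -> x = y.
Proof.
case: x => n h hP; case: y => n' h' hP' /= <- /functional_extensionality E.
subst h'; congr RhoT; apply: proof_irrelevance.
Qed.

Lemma rh0 x : rh x 0 = 0.
Proof. have := rhP x 1 0 0; rewrite !scale1r !addr0 => /esym/eqP; rewrite -subr_eq0 addrK. by move/eqP. Qed.
Lemma rhD x p q : rh x (p + q) = rh x p + rh x q.
Proof. by have := rhP x 1 p q; rewrite !scale1r. Qed.
Lemma rhZ x b p : rh x (b *: p) = b *: rh x p.
Proof. by rewrite -[b *: p]addr0 rhP rh0 addr0. Qed.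

Lemma rzero_subproof (b : B) (x y : P0) : (0 : N) = b *: 0 + 0.
Proof. by rewrite scaler0 addr0. Qed.
Definition rzero : rhoT := @RhoT 0 (fun _ => 0) rzero_subproof.
Lemma radd_subproof (x y : rhoT) b p q :
  rh x (b *: p + q) + rh y (b *: p + q) = b *: (rh x p + rh y p) + (rh x q + rh y q).
Proof. by rewrite !rhP scalerDr addrACA. Qed.
Definition radd (x y : rhoT) : rhoT := @RhoT (rn x + rn y) (fun p => rh x p + rh y p)
  (radd_subproof x y).
Lemma ropp_subproof (x : rhoT) b p q : - rh x (b *: p + q) = b *: (- rh x p) + - rh x q.
Proof. by rewrite rhP opprD scalerN. Qed.
Definition ropp (x : rhoT) : rhoT := @RhoT (- rn x) (fun p => - rh x p) (ropp_subproof x).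
Lemma raddA : associative radd. Proof. by move=> x y z; apply: rhoE => [|p] /=; rewrite addrA. Qed.
Lemma raddC : commutative radd. Proof. by move=> x y; apply: rhoE => [|p] /=; rewrite addrC. Qed.
Lemma radd0 : left_id rzero radd. Proof. by move=> x; apply: rhoE => [|p] /=; rewrite add0r. Qed.
Lemma raddN : left_inverse rzero ropp radd. Proof. by move=> x; apply: rhoE => [|p] /=; rewrite addNr. Qed.
HB.instance Definition _ := GRing.isZmodule.Build rhoT raddA raddC radd0 raddN.

Lemma rscale_subproof (a : A) (x : rhoT) b p q :
  rh x (rk a.2 (b *: p + q)) = b *: rh x (rk a.2 p) + rh x (rk a.2 q).
Proof. by rewrite rkD -rk_comm rhP. Qed.
Definition rscale (a : A) (x : rhoT) : rhoT :=
  @RhoT (a.1.1 *: rn x + rh x a.1.2) (fun p => rh x (rk a.2 p)) (rscale_subproof a x).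

Lemma rscaleA a b x : rscale a (rscale b x) = rscale (a * b) x.
Proof.
apply: rhoE => [|p] /=; last by rewrite rkA.
by rewrite scalerDr scalerA -rhZ -addrA -rhD.
Qed.
Lemma rscale1 : left_id 1 rscale.
Proof. by move=> x; apply: rhoE => [|p] /=; rewrite ?rk1 // rh0 scale1r addr0. Qed.
Lemma rscaleDr : right_distributive rscale +%R.
Proof. by move=> a x y; apply: rhoE => [|p] //=; rewrite scalerDr addrACA. Qed.
Lemma rscaleDl x : {morph rscale^~ x : a b / a + b}.
Proof. move=> a b; apply: rhoE => [|p] /=; last by rewrite rkDl rhD. by rewrite scalerDl rhD addrACA. Qed.
HB.instance Definition _ := GRing.Zmodule_isLmodule.Build A rhoT
  rscaleA rscale1 rscaleDr rscaleDl.

Lemma rn_scale (a : A) x : rn (a *: x) = a.1.1 *: rn x + rh x a.1.2. Proof. by []. Qed.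
Lemma rh_scale (a : A) x p : rh (a *: x) p = rh x (rk a.2 p). Proof. by []. Qed.
Lemma rn_add x y : rn (x + y) = rn x + rn y. Proof. by []. Qed.
Lemma rh_add x y p : rh (x + y) p = rh x p + rh y p. Proof. by []. Qed.
Lemma rn0 : rn 0 = 0. Proof. by []. Qed.
Lemma rh_0 p : rh 0 p = 0. Proof. by []. Qed.

Lemma rn_sum I (r : seq I) (F : I -> rhoT) : rn (\sum_(i <- r) F i) = \sum_(i <- r) rn (F i).
Proof. exact: (big_morph rn rn_add rn0). Qed.
Lemma rh_sum I (r : seq I) (F : I -> rhoT) p : rh (\sum_(i <- r) F i) p = \sum_(i <- r) rh (F i) p.
Proof. exact: (big_morph (fun x => rh x p) (fun x y => rh_add x y p) (rh_0 p)). Qed.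

Definition rlin (x : rhoT) : P0 -> N := rh x.
HB.instance Definition _ x := GRing.isLinear.Build B P0 N *:%R (rlin x) (@rhP x).
End Rho.

Section Adj.
Variables (k : fieldType) (B : falgType k) (P0 : lmodType B).
Local Notation A := (onept P0).
Variables (Q : lmodType A).

Lemma RM_eB (x : RM Q) : eB P0 *: val x = val x.
Proof. exact: (eqP (svalP x)). Qed.

Lemma Rof_subproof (q : Q) : eB P0 *: (eB P0 *: q) == eB P0 *: q.
Proof. by rewrite scalerA eBeB. Qed.
Definition Rof (q : Q) : RM Q := RMmk (Rof_subproof q).
Lemma Rp_subproof p (q : Q) : eB P0 *: (pP p *: q) == pP p *: q.
Proof. by rewrite scalerA eBpP. Qed.
Definition Rp p (q : Q) : RM Q := RMmk (Rp_subproof p q).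

Lemma Rof_val (x : RM Q) : Rof (val x) = x.
Proof. by apply: val_inj; rewrite /= RM_eB. Qed.
Lemma val_RZ (b : B) (x : RM Q) : val (b *: x) = inB P0 b *: val x. Proof. by []. Qed.
Lemma val_RD (x y : RM Q) : val (x + y) = val x + val y. Proof. by []. Qed.
Lemma val_R0 : val (0 : RM Q) = 0. Proof. by []. Qed.
Lemma act_RM (a : A) (x : RM Q) : a *: val x = val (a.1.1 *: x).
Proof. by rewrite -RM_eB scalerA mul_eB. Qed.
Lemma pP_RM p (x : RM Q) : pP p *: val x = 0.
Proof. by rewrite act_RM /= scale0r. Qed.

Lemma RpD (b : B) p p' q : Rp (b *: p + p') q = b *: Rp p q + Rp p' q.
Proof. by apply: val_inj; rewrite /= pPD scalerDl -inB_pP -scalerA. Qed.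

Lemma Rof_lin (a : A) q q' : Rof (a *: q + q') = a.1.1 *: Rof q + Rp a.1.2 q + Rof q'.
Proof.
apply: val_inj; rewrite /= scalerDr scalerA eB_mul -inB_pP_add scalerDl scalerA mul_eB.
by [].
Qed.
Lemma Rp_lin (a : A) p q q' : Rp p (a *: q + q') = Rp (rk a.2 p) q + Rp p q'.
Proof. by apply: val_inj; rewrite /= scalerDr scalerA pP_mul. Qed.
Lemma Rof_RZ (x : RM Q) : Rof (val x) = x. Proof. exact: Rof_val. Qed.
Lemma Rp_val p (x : RM Q) : Rp p (val x) = 0.
Proof. by apply: val_inj; rewrite /= pP_RM. Qed.

Variable N : lmodType B.

Section AdjDef.
Variable g : {linear RM Q -> N}.
Lemma adj_subproof q (b : B) x y :
  g (Rp (b *: x + y) q) = b *: g (Rp x q) + g (Rp y q).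
Proof. by rewrite RpD linearP. Qed.
Definition adj (q : Q) : rhoT P0 N := @RhoT _ _ P0 N (g (Rof q)) (fun p => g (Rp p q))
  (adj_subproof q).
Lemma adj_linear : linear adj.
Proof.
move=> a q q'; apply: rhoE => [|p] /=.
  by rewrite Rof_lin !linearD linearZ.
by rewrite Rp_lin linearD.
Qed.
HB.instance Definition _ := GRing.isLinear.Build A Q (rhoT P0 N) *:%R adj adj_linear.
Lemma rn_adj q : rn (adj q) = g (Rof q). Proof. by []. Qed.
Lemma rh_adj q p : rh (adj q) p = g (Rp p q). Proof. by []. Qed.
End AdjDef.

Section CoadjDef.
Variable F : {linear Q -> rhoT P0 N}.
Definition coadj (x : RM Q) : N := rn (F (val x)).
Lemma coadj_linear : linear coadj.
Proof.
move=> b x y; rewrite /coadj val_RD val_RZ linearD linearZ rn_add rn_scale /=.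
by rewrite rh0 addr0.
Qed.
HB.instance Definition _ := GRing.isLinear.Build B (RM Q) N *:%R coadj coadj_linear.
End CoadjDef.

Lemma rn_eB (x : rhoT P0 N) : rn (eB P0 *: x) = rn x.
Proof. by rewrite rn_scale /= rh0 addr0 scale1r. Qed.
Lemma rn_pP p (x : rhoT P0 N) : rn (pP p *: x) = rh x p.
Proof. by rewrite rn_scale /= scale0r add0r. Qed.
End Adj.

Section Dc.
Variables (k : fieldType) (B : falgType k) (P0 : lmodType B).
Local Notation A := (onept P0).
Variables (Q1 Q0 : lmodType A) (sigma : {linear Q1 -> Q0}) (N : lmodType B).

Lemma val_Rmor (x : RM Q1) : val (Rmor sigma x) = sigma (val x). Proof. by []. Qed.
Lemma Rof_sigma q : Rof (sigma q) = Rmor sigma (Rof q).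
Proof. by apply: val_inj; rewrite val_Rmor /= linearZ. Qed.
Lemma Rp_sigma p q : Rp p (sigma q) = Rmor sigma (Rp p q).
Proof. by apply: val_inj; rewrite val_Rmor /= linearZ. Qed.

Lemma D1 : Dcls (Rmor sigma) N -> Dcls sigma (rhoT P0 N).
Proof.
move=> HD F; have [g Hg] := HD (coadj F).
exists (adj g) => q; apply: rhoE => [|p].
  change (g (Rof (sigma q)) = rn (F q)); rewrite Rof_sigma Hg.
  by change (rn (F (eB P0 *: q)) = rn (F q)); rewrite linearZ rn_eB.
change (g (Rp p (sigma q)) = rh (F q) p); rewrite Rp_sigma Hg.
by change (rn (F (pP p *: q)) = rh (F q) p); rewrite linearZ rn_pP.
Qed.

Lemma D2 : Dcls sigma (rhoT P0 N) -> Dcls (Rmor sigma) N.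
Proof.
move=> HD f; have [G HG] := HD (adj f).
exists (coadj G) => x; change (rn (G (val (Rmor sigma x))) = f x).
by rewrite val_Rmor HG; change (f (Rof (val x)) = f x); rewrite Rof_val.
Qed.
End Dc.

Section Gen1.
Variables (k : fieldType) (B : falgType k) (P0 : lmodType B).
Local Notation A := (onept P0).
Variables (T : lmodType A) (N : lmodType B).

Lemma Gen_down : Gen T (rhoT P0 N) -> Gen (RM T) N.
Proof.
move=> [I [F HF]]; exists I, (fun i => coadj (F i)) => n.
have [s Hs] := HF (@RhoT _ _ P0 N n (fun _ => 0) (rzero_subproof N)).
exists [seq (q.1, Rof q.2) | q <- s].
have E : n = rn (eB P0 *: \sum_(q <- s) F q.1 q.2) by rewrite -Hs rn_eB.
rewrite E scaler_sumr rn_sum big_map; apply: eq_bigr => q _.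
by rewrite -linearZ.
Qed.
End Gen1.

Section Ext.
Variables (k : fieldType) (B : falgType k) (P0 : lmodType B).
Local Notation A := (onept P0).
Variables (T : lmodType A) (h : P0 -> RM T)
  (hL : forall (b : B) x y, h (b *: x + y) = b *: h x + h y).

Lemma h0 : h 0 = 0.
Proof. by have := hL 1 0 0; rewrite !scale1r !addr0 => /esym/eqP; rewrite -subr_eq0 addrK => /eqP. Qed.
Lemma hD x y : h (x + y) = h x + h y.
Proof. by have := hL 1 x y; rewrite !scale1r. Qed.
Lemma hZ b x : h (b *: x) = b *: h x.
Proof. by rewrite -[b *: x]addr0 hL h0 addr0. Qed.

Definition Et : Type := (T * k)%type.
HB.instance Definition _ := GRing.Zmodule.on Et.

Definition Escale (a : A) (e : Et) : Et :=
  (a *: e.1 + val (h (rk e.2 a.1.2)), a.2 * e.2).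

Lemma EscaleA a b e : Escale a (Escale b e) = Escale (a * b) e.
Proof.
case: e => t d; rewrite /Escale /=; congr (_, _); last by rewrite mulrA.
rewrite scalerDr scalerA act_RM rkD -rk_comm rkA hD hZ val_RD -addrA; congr (_ + _).
Qed.
Lemma Escale1 : left_id 1 Escale.
Proof. by case=> t d; rewrite /Escale /= scale1r rkr0 h0 addr0 mul1r. Qed.
Lemma EscaleDr : right_distributive Escale +%R.
Proof.
case=> [[a p] c] [t d] [t' d']; rewrite /Escale /=; congr (_, _); last by rewrite mulrDr.
by rewrite /= scalerDr rkDl hD val_RD addrACA.
Qed.
Lemma EscaleDl e : {morph Escale^~ e : a b / a + b}.
Proof.
case: e => t d [[a p] c] [[a' p'] c']; rewrite /Escale /=; congr (_, _); last by rewrite mulrDl.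
by rewrite scalerDl rkD hD val_RD addrACA.
Qed.
HB.instance Definition _ := GRing.Zmodule_isLmodule.Build A Et
  EscaleA Escale1 EscaleDr EscaleDl.

Definition iE (t : T) : Et := (t, 0).
Lemma iE_linear : linear iE.
Proof.
move=> a t t'; rewrite /iE; apply/eqP; rewrite xpair_eqE /=.
by rewrite /Escale /= rk0 h0 addr0 mulr0 addr0 !eqxx.
Qed.
HB.instance Definition _ := GRing.isLinear.Build A T Et *:%R iE iE_linear.
Definition pE (e : Et) : Smod P0 := e.2.
Lemma pE_linear : linear pE.
Proof. by move=> a e e'. Qed.
HB.instance Definition _ := GRing.isLinear.Build A Et (Smod P0) *:%R pE pE_linear.

Definition oneS (P : lmodType B) : Smod P := (1 : k).

Lemma ext_witness : Ext1_zero (Smod P0) T ->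
  exists t0 : T, eB P0 *: t0 = 0 /\ forall p, pP p *: t0 = val (h p).
Proof.
move=> Hx.
have [s Hs] : exists s : {linear Smod P0 -> Et}, forall x, pE (s x) = x.
  apply: (Hx Et iE pE).
  - by move=> t t' [].
  - by move=> x; exists (0, x).
  move=> [t d]; split.
    by rewrite /pE /= => ->; exists t.
  by move=> [y <-].
set e := s (oneS P0).
have e2 : e.2 = 1 by exact: (Hs (oneS P0)).
have E1 : eB P0 *: e = 0.
  by rewrite -linearZ (_ : eB P0 *: (oneS P0) = 0) ?raddf0 //; exact: mul0r.
have E2 p : pP p *: e = 0.
  by rewrite -linearZ (_ : pP p *: (oneS P0) = 0) ?raddf0 //; exact: mul0r.
exists (- e.1); split.
  have := congr1 fst E1; rewrite /= /Escale /= rkr0 h0 addr0 => H.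
  by rewrite scalerN H oppr0.
move=> p; have := congr1 fst (E2 p); rewrite /= /Escale /= e2 rk1 scalerN => /eqP.
by rewrite addr_eq0 => /eqP ->; rewrite opprK.
Qed.
End Ext.

Section Dual.
Variables (k : fieldType) (B : falgType k) (P0 : lmodType B).
Variables (m : nat) (v : 'I_m -> P0).
Definition comb (r : 'rV[B]_m) : P0 := \sum_j r 0 j *: v j.
Lemma comb_linear : linear comb.
Proof.
move=> b r r'; rewrite /comb scaler_sumr -big_split /=; apply: eq_bigr => j _.
by rewrite !mxE scalerDl scalerA.
Qed.
HB.instance Definition _ := GRing.isLinear.Build B 'rV[B]_m P0 *:%R comb comb_linear.
End Dual.

Lemma dual_basis (k : fieldType) (B : falgType k) (P0 : lmodType B) :
  fin_gen P0 -> projective P0 ->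
  exists m (v : 'I_m -> P0) (c : 'I_m -> P0 -> B),
    (forall j (b : B) x y, c j (b *: x + y) = b * c j x + c j y) /\
    (forall p, p = \sum_j c j p *: v j).
Proof.
move=> [m [v Hv]] Hp.
have Hs : surj (comb v).
  move=> p; have [c Hc] := Hv p; exists (\row_i c i).
  by rewrite Hc /comb; apply: eq_bigr => j _; rewrite mxE.
have [l Hl] := Hp _ _ (comb v) (@idfun P0 : {linear P0 -> P0}) Hs.
exists m, v, (fun j p => l p 0 j); split.
  by move=> j b x y; rewrite linearP !mxE.
by move=> p; rewrite -{1}[p]Hl.
Qed.

Section Gen2.
Variables (k : fieldType) (B : falgType k) (P0 : lmodType B).
Local Notation A := (onept P0).
Variables (T : lmodType A) (N : lmodType B).
Hypothesis Hx : Ext1_zero (Smod P0) T.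

Lemma unit_surj (x : RM T) (h : P0 -> RM T)
  (hL : forall (b : B) x y, h (b *: x + y) = b *: h x + h y) :
  exists t, Rof t = x /\ forall p, Rp p t = h p.
Proof.
have [t0 [H1 H2]] := ext_witness hL Hx.
exists (val x + t0); split.
  by apply: val_inj; rewrite /= scalerDr H1 addr0 RM_eB.
by move=> p; apply: val_inj; rewrite /= scalerDr H2 pP_RM add0r.
Qed.

Variables (I : Type) (F : I -> {linear RM T -> N}).
Hypothesis HF : forall n : N, exists s : seq (I * RM T), n = \sum_(q <- s) F q.1 q.2.

Definition isS (m : rhoT P0 N) :=
  exists s : seq (I * T), m = \sum_(q <- s) adj (F q.1) q.2.

Lemma isS0 : isS 0. Proof. by exists [::]; rewrite big_nil. Qed.
Lemma isSD x y : isS x -> isS y -> isS (x + y).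
Proof. by move=> [s ->] [s' ->]; exists (s ++ s'); rewrite big_cat. Qed.
Lemma isS_sum J (r : seq J) (G : J -> rhoT P0 N) : (forall j, isS (G j)) ->
  isS (\sum_(j <- r) G j).
Proof.
move=> HG; elim: r => [|j r IH]; first by rewrite big_nil; exact: isS0.
by rewrite big_cons; apply: isSD.
Qed.
Lemma isS_gen i t : isS (adj (F i) t).
Proof. by exists [:: (i, t)]; rewrite big_seq1. Qed.

Lemma isS_n (n : N) : isS (@RhoT _ _ P0 N n (fun _ => 0) (rzero_subproof N)).
Proof.
have [s Hs] := HF n; exists [seq (q.1, val q.2) | q <- s]; rewrite big_map.
apply: rhoE => [|p]; rewrite ?rn_sum ?rh_sum /=.
  by rewrite Hs; apply: eq_bigr => q _; rewrite /= Rof_val.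
by rewrite big1 // => q _; change (F q.1 (Rp p (val q.2)) = 0); rewrite Rp_val raddf0.
Qed.

Variables (cf : P0 -> B) (cfL : forall (b : B) x y, cf (b *: x + y) = b * cf x + cf y).
Lemma elt_subproof (y : N) (b : B) x x' :
  cf (b *: x + x') *: y = b *: (cf x *: y) + cf x' *: y.
Proof. by rewrite cfL scalerDl scalerA. Qed.
Definition elt (y : N) : rhoT P0 N := @RhoT _ _ P0 N 0 (fun p => cf p *: y) (elt_subproof y).

Lemma isS_elt y : isS (elt y).
Proof.
have [s ->] := HF y; elim: s => [|q s IH].
  rewrite big_nil (_ : elt 0 = 0); first exact: isS0.
  by apply: rhoE => [|p] //=; rewrite scaler0.
rewrite big_cons (_ : elt _ = elt (F q.1 q.2) + elt (\sum_(j <- s) F j.1 j.2)).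
  apply: isSD => //.
  have hL : forall (b : B) x y, (fun p => cf p *: q.2) (b *: x + y) =
     b *: (fun p => cf p *: q.2) x + (fun p => cf p *: q.2) y.
    by move=> b x x'; rewrite /= cfL scalerDl scalerA.
  have [t [Ht1 Ht2]] := unit_surj 0 hL.
  rewrite (_ : elt _ = adj (F q.1) t); first exact: isS_gen.
  apply: rhoE => [|p]; first by change (0 = F q.1 (Rof t)); rewrite Ht1 raddf0.
  by change (cf p *: F q.1 q.2 = F q.1 (Rp p t)); rewrite Ht2 linearZ.
by apply: rhoE => [|p] /=; rewrite ?addr0 // scalerDr.
Qed.
End Gen2.

Lemma Gen_up (k : fieldType) (B : falgType k) (P0 : lmodType B)
  (T : lmodType (onept P0)) (N : lmodType B) :
  fin_gen P0 -> projective P0 -> Ext1_zero (Smod P0) T ->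
  Gen (RM T) N -> Gen T (rhoT P0 N).
Proof.
move=> hfg hpr Hx [I [F HF]].
have [m [v [c [cL Hc]]]] := dual_basis hfg hpr.
exists I, (fun i => adj (F i)) => x.
suff : isS F x by [].
have -> : x = @RhoT _ _ P0 N (rn x) (fun _ => 0) (rzero_subproof N) +
   \sum_(j < m) elt (cL j) (rh x (v j)).
  apply: rhoE => [|p]; rewrite ?rn_add ?rh_add ?rn_sum ?rh_sum /=.
    by rewrite big1 ?addr0.
  rewrite add0r {1}(Hc p); change (rlin x (\sum_j c j p *: v j) = \sum_(i < m) c i p *: rlin x (v i)).
  by rewrite linear_sum; apply: eq_bigr => j _; rewrite linearZ.
apply: isSD; first exact: isS_n.
by apply: isS_sum => j; apply: isS_elt.
Qed.

Section RMap.
Variables (k : fieldType) (B : falgType k) (P0 : lmodType B).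
Local Notation A := (onept P0).
Variables (M N : lmodType B) (g : {linear M -> N}).
Lemma rmap_subproof (x : rhoT P0 M) (b : B) p q :
  g (rh x (b *: p + q)) = b *: g (rh x p) + g (rh x q).
Proof. by rewrite rhP linearP. Qed.
Definition rmap (x : rhoT P0 M) : rhoT P0 N :=
  @RhoT _ _ P0 N (g (rn x)) (fun p => g (rh x p)) (rmap_subproof x).
Lemma rmap_linear : linear rmap.
Proof.
move=> a x y; apply: rhoE => [|p] /=; last by rewrite linearD.
by rewrite !linearD linearZ.
Qed.
HB.instance Definition _ := GRing.isLinear.Build A (rhoT P0 M) (rhoT P0 N) *:%R rmap rmap_linear.

Lemma rmap_surj : projective P0 -> surj g -> surj rmap.
Proof.
move=> hP Hg z; have [mm Hm] := Hg (rn z).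
have [l Hl] := hP _ _ g (rlin z) Hg.
have lP : forall (b : B) p q, l (b *: p + q) = b *: l p + l q by move=> *; rewrite linearP.
exists (@RhoT _ _ P0 M mm (fun p => l p) lP); apply: rhoE => [|p] //=.
Qed.
End RMap.

Lemma RM_proj (k : fieldType) (B : falgType k) (P0 : lmodType B) (Q : lmodType (onept P0)) :
  projective P0 -> projective Q -> projective (RM Q).
Proof.
move=> hP hQ M N g f Hg.
have [H HH] := hQ _ _ (rmap g) (adj f) (rmap_surj hP Hg).
exists (coadj H) => x; change (g (rn (H (val x))) = f x).
have E := congr1 (fun z => rn z) (HH (val x)).
change (g (rn (H (val x))) = f (Rof (val x))) in E.
by rewrite E Rof_val.
Qed.

Unset Implicit Arguments.
Set Strict Implicit.
Set Printing Implicit Defensive.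

Theorem theorem5p2 (k : closedFieldType) (B : falgType k) (P0 : lmodType B)
  (hP0 : fin_gen P0 /\ projective P0)
  (Q1 Q0 T : lmodType (onept P0)) (sigma : {linear Q1 -> Q0})
  (hT : silting_wrt sigma T) :
  (forall N : lmodType B, Dcls (Rmor sigma) N -> Gen (RM T) N) /\
  (Ext1_zero (Smod P0) T ->
     (forall N : lmodType B, Gen (RM T) N -> Dcls (Rmor sigma) N) /\
     silting (RM T)).
Proof.
move: hP0 => [hfg hpr]; have [[pQ1 pQ0 [pi [Hpi Hker]]] HT] := hT.
have P1 : forall N : lmodType B, Dcls (Rmor sigma) N -> Gen (RM T) N.
  by move=> N HD; apply: Gen_down; apply/HT; apply: D1.
split => // Hx.
have P2 : forall N : lmodType B, Gen (RM T) N -> Dcls (Rmor sigma) N.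
  by move=> N HG; apply: D2; apply/HT; apply: Gen_up.
split => //.
exists (RM Q1), (RM Q0), (Rmor sigma); split; last by move=> M; split; [apply: P1 | apply: P2].
split; [exact: RM_proj | exact: RM_proj |].
exists (Rmor pi); split.
  move=> y; have [q Hq] := Hpi (val y); exists (Rof q).
  by rewrite -Rof_sigma Hq Rof_val.
move=> y; split.
  move=> /(congr1 val); rewrite val_Rmor => /Hker [x Hx'].
  by exists (Rof x); rewrite -Rof_sigma Hx' Rof_val.
move=> [x <-]; apply: val_inj; rewrite !val_Rmor /=.
by apply/Hker; exists (val x).
Qed.
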